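(* Let $G$ be a Hausdorff étale groupoid, let $R$ be a commutative unital ring with the discrete topology, let $T \le R^\times$, and let $(\Sigma, i, q)$ be a discrete twist by $T$ over $G$. Then: (a) $\Sigma$ is étale; (b) $i$ is a homeomorphism onto an open subset of $\Sigma$; (c) for each $\alpha \in G$ there exist an open bisection $B_\alpha$ of $G$ containing $\alpha$ and a continuous map $P_\alpha\colon B_\alpha \to \Sigma$ satisfying $q \circ P_\alpha = \mathrm{id}_{B_\alpha}$, such that $(\beta,z) \mapsto i(r(\beta),z)P_\alpha(\beta)$ is a homeomorphism $B_\alpha \times T \to q^{-1}(B_\alpha)$, and additionally $P_\alpha(G^{(0)} \cap B_\alpha) \subseteq \Sigma^{(0)}$; (d) if $G$ is ample, then for each $\alpha \in G$ the open bisection $B_\alpha$ and the map $P_\alpha$ satisfying the first two properties in (c) can be chosen with $B_\alpha$ compact.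
   Context: Groupoids are locally compact Hausdorff topological groupoids; $G$ is étale if $r$ is a local homeomorphism, ample if it has a basis of compact open bisections. A discrete twist by $T$ over $G$ is a sequence $G^{(0)} \times T \xrightarrow{i} \Sigma \xrightarrow{q} G$, where $T$ carries the discrete topology, $G^{(0)} \times T$ is the trivial group bundle with fibres $T$, $\Sigma$ is a Hausdorff groupoid with $\Sigma^{(0)} = i(G^{(0)} \times \{1\})$, and $i, q$ are continuous groupoid homomorphisms restricting to homeomorphisms of unit spaces, such that: (1) $i(\{x\} \times T) = q^{-1}(x)$ for all $x \in G^{(0)}$, $i$ is injective, and $q$ is a quotient map; (2) for each $\alpha \in G$ there are an open bisection $B_\alpha \ni \alpha$ of $G$ and a continuous $P_\alpha\colon B_\alpha \to \Sigma$ with $q \circ P_\alpha = \mathrm{id}_{B_\alpha}$ such that $(\beta,z) \mapsto i(r(\beta),z)P_\alpha(\beta)$ is a homeomorphism $B_\alpha \times T \to q^{-1}(B_\alpha)$; (3) $i(r(\varepsilon),z)\varepsilon = \varepsilon\, i(s(\varepsilon),z)$ for all $\varepsilon \in \Sigma$, $z \in T$. $\Sigma^{(0)}$ is identified with $G^{(0)}$ via $q$. *)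

(* Defs.v *)
From HB Require Import structures.
From mathcomp Require Import all_boot all_order all_algebra.
From mathcomp Require Import all_classical all_reals.
From mathcomp Require Import topology.
Set Implicit Arguments.
Unset Strict Implicit.
Unset Printing Implicit Defensive.
Import Order.TTheory GRing.Theory Num.Theory.
Local Open Scope classical_set_scope.
Local Open Scope ring_scope.

(** Groupoid operations on a carrier X, encoded by total functions:
    range, source, multiplication (meaningful on composable pairs
    a, b with [gs a = gr b], i.e. the product [ab]) and inverse. *)
Record gops (X : Type) := GOps {
  gr : X -> X ;
  gs : X -> X ;
  gmul : X -> X -> X ;
  ginv : X -> X }.

Definition units_of {X : Type} (o : gops X) : set X := [set x | gr o x = x].

Definition composable {X : Type} (o : gops X) : set (X * X) :=
  [set p | gs o p.1 = gr o p.2].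

Definition is_groupoid {X : Type} (o : gops X) : Prop :=
  [/\ (forall a, gs o (gr o a) = gr o a /\ gr o (gr o a) = gr o a) /\
      (forall a, gr o (gs o a) = gs o a /\ gs o (gs o a) = gs o a),
      (forall a b, gs o a = gr o b ->
         gr o (gmul o a b) = gr o a /\ gs o (gmul o a b) = gs o b),
      (forall a b c, gs o a = gr o b -> gs o b = gr o c ->
         gmul o (gmul o a b) c = gmul o a (gmul o b c)),
      (forall a, gmul o (gr o a) a = a /\ gmul o a (gs o a) = a) &
      (forall a, [/\ gr o (ginv o a) = gs o a, gs o (ginv o a) = gr o a,
                     gmul o a (ginv o a) = gr o a &
                     gmul o (ginv o a) a = gs o a])].

Definition topological_groupoid {X : topologicalType} (o : gops X) : Prop :=
  [/\ is_groupoid o, continuous (gr o), continuous (gs o),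
      continuous (ginv o) &
      {within composable o, continuous (fun p : X * X => gmul o p.1 p.2)}].

Definition homeo {X Y : topologicalType} (A : set X) (B : set Y)
  (f : X -> Y) : Prop :=
  exists g : Y -> X,
    [/\ (forall a, A a -> B (f a)), (forall b, B b -> A (g b)),
        (forall a, A a -> g (f a) = a) /\ (forall b, B b -> f (g b) = b),
        {within A, continuous f} & {within B, continuous g}].

Definition open_in {X : topologicalType} (E U : set X) : Prop :=
  exists O, open O /\ U = E `&` O.

Definition local_homeo_onto {X : topologicalType} (E : set X) (f : X -> X) :=
  (forall x, E (f x)) /\
  forall x, exists U, [/\ open U, U x, open_in E (f @` U) &
                          homeo U (f @` U) f].

Definition etale {X : topologicalType} (o : gops X) : Prop :=
  local_homeo_onto (units_of o) (gr o).

Definition bisection {X : Type} (o : gops X) (B : set X) : Prop :=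
  (forall a b, B a -> B b -> gr o a = gr o b -> a = b) /\
  (forall a b, B a -> B b -> gs o a = gs o b -> a = b).

Definition open_bisection {X : topologicalType} (o : gops X) (B : set X) :=
  open B /\ bisection o B.

Definition ample {X : topologicalType} (o : gops X) : Prop :=
  forall U x, open U -> U x ->
    exists B, [/\ open_bisection o B, compact B, B x & B `<=` U].

Definition groupoid_hom {X Y : Type} (D : set X) (o1 : gops X) (o2 : gops Y)
  (f : X -> Y) : Prop :=
  (forall a, D a -> f (gr o1 a) = gr o2 (f a) /\ f (gs o1 a) = gs o2 (f a)) /\
  (forall a b, D a -> D b -> gs o1 a = gr o1 b ->
     f (gmul o1 a b) = gmul o2 (f a) (f b)).

Definition quotient_map {X Y : topologicalType} (f : X -> Y) : Prop :=
  [/\ continuous f, (forall y, exists x, f x = y) &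
      (forall U : set Y, open (f @^-1` U) -> open U)].

Definition unit_subgroup {R : comUnitRingType} (T : set R) : Prop :=
  [/\ (forall z, T z -> z \is a GRing.unit), T 1,
      (forall z w, T z -> T w -> T (z * w)) &
      (forall z, T z -> T z^-1)].

(** The trivial group bundle G^(0) x T, as a subset of
    G x R (R with the discrete topology), with its groupoid operations. *)
Definition bundle_dom {X : Type} {R : comUnitRingType} (o : gops X)
  (T : set R) : set (X * discrete_topology R) :=
  [set p | units_of o p.1 /\ T p.2].

Definition bundle_ops (X : Type) (R : comUnitRingType) :
  gops (X * discrete_topology R) :=
  @GOps (X * discrete_topology R)
    (fun p => (p.1, (1 : R))) (fun p => (p.1, (1 : R)))
    (fun p q => (p.1, (p.2 : R) * q.2)) (fun p => (p.1, (p.2 : R)^-1)).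

Definition bundle_units {X : Type} (o : gops X) (R : comUnitRingType) :
  set (X * discrete_topology R) := [set p | units_of o p.1 /\ p.2 = (1 : R)].

Arguments bundle_units {X} o R.

Definition prod_T {X : Type} {R : comUnitRingType} (B : set X) (T : set R) :
  set (X * discrete_topology R) := [set p | B p.1 /\ T p.2].

Definition triv_map {G S : Type} {R : comUnitRingType} (oG : gops G)
  (oS : gops S) (i : G * discrete_topology R -> S) (P : G -> S) :
  G * discrete_topology R -> S :=
  fun p => gmul oS (i (gr oG p.1, p.2)) (P p.1).

Definition discrete_twist {G S : topologicalType} {R : comUnitRingType}
  (oG : gops G) (T : set R) (oS : gops S)
  (i : G * discrete_topology R -> S) (q : S -> G) : Prop :=
  [/\ topological_groupoid oS /\ hausdorff_space S /\
      units_of oS = i @` bundle_units oG R,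
      [/\ {within bundle_dom oG T, continuous i},
          groupoid_hom (bundle_dom oG T) (bundle_ops G R) oS i,
          continuous q & groupoid_hom setT oS oG q],
      (homeo (bundle_units oG R) (units_of oS) i /\
      homeo (units_of oS) (units_of oG) q) /\
      [/\ (forall x, units_of oG x ->
             i @` prod_T [set x] T = q @^-1` [set x]),
          (forall p p', bundle_dom oG T p -> bundle_dom oG T p' ->
             i p = i p' -> p = p') &
          quotient_map q],
      (forall alpha, exists B, exists P : G -> S,
         [/\ open_bisection oG B, B alpha, {within B, continuous P},
             (forall beta, B beta -> q (P beta) = beta) &
             homeo (prod_T B T) (q @^-1` B) (triv_map oG oS i P)]) &
      (forall e z, T z ->
         gmul oS (i (q (gr oS e), z)) e =
         gmul oS e (i (q (gs oS e), z)))].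

(* Main.v *)
Require Import Defs.
From HB Require Import structures.
From mathcomp Require Import all_boot all_order all_algebra.
From mathcomp Require Import all_classical all_reals.
From mathcomp Require Import topology.
Local Open Scope classical_set_scope.
Local Open Scope ring_scope.
Set Implicit Arguments.
Import GRing.Theory.
Unset Strict Implicit.
Unset Printing Implicit Defensive.

Lemma wcP {X Y : topologicalType} (A : set X) (f : X -> Y) :
  {within A, continuous f} <-> forall x, A x -> forall V, open V -> V (f x) ->
    exists W, [/\ open W, W x & forall y, A y -> W y -> V (f y)].
Proof.
rewrite subspace_continuousP; split.
  move=> H x Ax V oV Vfx.
  have := H x Ax V (open_nbhs_nbhs (conj oV Vfx)).
  rewrite /= nbhs_simpl /within /prop_near1 /=.
  rewrite nbhsE => -[W [oW Wx] WV]; exists W; split => // y Ay Wy.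
  exact: (WV y Wy Ay).
move=> H x Ax V; rewrite /= nbhs_simpl nbhsE => -[V' [oV' V'fx] V'V].
have [W [oW Wx WV]] := H x Ax V' oV' V'fx.
rewrite /within /prop_near1 /= nbhsE; exists W => // y Wy Ay.
exact/V'V/WV.
Qed.

Lemma nbhs_prodP {X Y : topologicalType} (p : X * Y) (A : set (X * Y)) :
  nbhs p A <-> exists P Q, [/\ open P, P p.1, open Q, Q p.2 &
                             forall a b, P a -> Q b -> A (a, b)].
Proof.
split.
  case=> [[P Q] /= [nP nQ] PQA].
  move: nP nQ; rewrite !nbhsE => -[P' [oP' P'p] P'P] [Q' [oQ' Q'p] Q'Q].
  exists P', Q'; split => // a b Pa Qb; apply: PQA; split; [exact: P'P|exact: Q'Q].
case=> P [Q [oP Pp oQ Qp PQA]].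
exists (P, Q); first by split; apply: open_nbhs_nbhs.
by case=> a b [/= ? ?]; apply: PQA.
Qed.

Lemma openX {X Y : topologicalType} (P : set X) (Q : set Y) :
  open P -> open Q -> open [set p : X * Y | P p.1 /\ Q p.2].
Proof.
move=> oP oQ; rewrite openE => p [Pp Qp]; rewrite /interior.
apply/nbhs_prodP; exists P, Q; split => //.
Qed.

Lemma open_nbhsP {X : topologicalType} (A : set X) :
  (forall x, A x -> exists W, [/\ open W, W x & W `<=` A]) -> open A.
Proof.
move=> H; rewrite openE => x Ax; rewrite /interior nbhsE.
have [W [oW Wx WA]] := H x Ax; by exists W.
Qed.

Lemma wc_pair {X Y Z : topologicalType} (A : set X) (f : X -> Y) (g : X -> Z) :
  {within A, continuous f} -> {within A, continuous g} ->
  {within A, continuous (fun x => (f x, g x))}.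
Proof.
move=> /wcP cf /wcP cg; apply/wcP => x Ax V oV Vx.
move: oV; rewrite openE => /(_ _ Vx); rewrite /interior => /nbhs_prodP.
case=> P [Q [oP Pp oQ Qp PQV]].
have [W1 [oW1 W1x H1]] := cf x Ax P oP Pp.
have [W2 [oW2 W2x H2]] := cg x Ax Q oQ Qp.
exists (W1 `&` W2); split; [exact: openI| by []|].
by move=> y Ay [W1y W2y]; apply: PQV; [apply: H1|apply: H2].
Qed.

Lemma wc_comp {X Y Z : topologicalType} (A : set X) (B : set Y)
  (f : X -> Y) (g : Y -> Z) :
  {within A, continuous f} -> (forall x, A x -> B (f x)) ->
  {within B, continuous g} -> {within A, continuous (g \o f)}.
Proof.
move=> /wcP cf AB /wcP cg; apply/wcP => x Ax V oV Vx.
have [W1 [oW1 W1x H1]] := cg (f x) (AB x Ax) V oV Vx.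
have [W2 [oW2 W2x H2]] := cf x Ax W1 oW1 W1x.
by exists W2; split => // y Ay W2y; apply: H1; [apply: AB|apply: H2].
Qed.

Lemma wc_cont {X Y : topologicalType} (A : set X) (f : X -> Y) :
  continuous f -> {within A, continuous f}.
Proof. exact: continuous_subspaceT. Qed.

Lemma wc_cst {X Y : topologicalType} (A : set X) (c : Y) :
  {within A, continuous (fun _ : X => c)}.
Proof.
apply/wcP => x Ax V oV Vc; exists setT; split => //; exact: openT.
Qed.

Lemma wc_id {X : topologicalType} (A : set X) :
  {within A, continuous (fun x : X => x)}.
Proof.
by apply/wcP => x Ax V oV Vx; exists V.
Qed.

Lemma wc_fst {X Y : topologicalType} (A : set (X * Y)) :
  {within A, continuous (fun p : X * Y => p.1)}.
Proof.
apply/wcP => x Ax V oV Vx; exists [set p | V p.1 /\ setT p.2]; split => //.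
  by apply: openX => //; exact: openT.
by move=> y _ [].
Qed.

Lemma wc_preim {X Y : topologicalType} (A : set X) (f : X -> Y) (V : set Y) :
  {within A, continuous f} -> open V -> open_in A [set x | A x /\ V (f x)].
Proof.
move=> /wcP cf oV.
exists (\bigcup_(W in [set W | open W /\ forall y, A y -> W y -> V (f y)]) W).
split.
  by apply: bigcup_open => W [].
apply/seteqP; split => x /=.
  case=> Ax Vfx; split => //.
  have [W [oW Wx WV]] := cf x Ax V oV Vfx.
  by exists W.
by case=> Ax [W [oW WV] Wx]; split => //; apply: WV.
Qed.

Lemma open_in_open {X : topologicalType} (A D : set X) :
  open A -> open_in A D -> open D.
Proof. by move=> oA [O [oO ->]]; apply: openI. Qed.

Lemma open_in_trans {X : topologicalType} (E C D : set X) :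
  open_in E C -> open_in C D -> open_in E D.
Proof.
case=> O1 [oO1 ->] [O2 [oO2 ->]]; exists (O1 `&` O2); split; first exact: openI.
by rewrite setIA.
Qed.
Lemma homeo_inv {X Y : topologicalType} (A : set X) (B : set Y) (f : X -> Y) :
  homeo A B f -> exists g, [/\ homeo B A g, forall a, A a -> g (f a) = a,
    forall b, B b -> f (g b) = b, forall a, A a -> B (f a) &
    forall b, B b -> A (g b)].
Proof.
case=> g [fAB gBA [gf fg] cf cg]; exists g; split => //.
by exists f; split.
Qed.

Lemma homeo_comp {X Y Z : topologicalType} (A : set X) (B : set Y) (C : set Z)
  (f : X -> Y) (g : Y -> Z) :
  homeo A B f -> homeo B C g -> homeo A C (g \o f).
Proof.
case=> f' [fAB f'BA [f'f ff'] cf cf'] [g' [gBC g'CB [g'g gg'] cg cg']].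
exists (f' \o g'); split.
- by move=> a Aa; apply/gBC/fAB.
- by move=> c Cc; apply/f'BA/g'CB.
- split => [a Aa|c Cc] /=; first by rewrite g'g ?f'f //; apply: fAB.
  by rewrite ff' ?gg' //; apply: g'CB.
- exact: (wc_comp cf fAB cg).
- exact: (wc_comp cg' g'CB cf').
Qed.

Lemma homeo_sub {X Y : topologicalType} (A A' : set X) (B : set Y) (f : X -> Y) :
  homeo A B f -> A' `<=` A -> homeo A' (f @` A') f.
Proof.
case=> g [fAB gBA [gf fg] cf cg] AA'; exists g; split.
- by move=> a A'a; exists a.
- by move=> _ [a A'a <-]; rewrite gf //; apply: AA'.
- split => [a A'a|b [a A'a <-]]; first by rewrite gf //; apply: AA'.
  by rewrite gf //; apply: AA'.
- exact: continuous_subspaceW cf.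
- apply: continuous_subspaceW cg.
  by move=> _ [a A'a <-]; apply/fAB/AA'.
Qed.

Lemma homeo_ext {X Y : topologicalType} (A : set X) (B : set Y) (f f' : X -> Y) :
  homeo A B f -> (forall a, A a -> f a = f' a) -> homeo A B f'.
Proof.
case=> g [fAB gBA [gf fg] cf cg] ff'; exists g; split.
- by move=> a Aa; rewrite -ff' //; apply: fAB.
- exact: gBA.
- split => [a Aa|b Bb]; first by rewrite -ff' // gf.
  by rewrite -ff' ?fg //; apply: gBA.
- apply/wcP => x Ax V oV Vx; move/wcP: cf => /(_ x Ax V oV); rewrite ff' //.
  case=> // W [oW Wx WV]; exists W; split => // y Ay Wy; rewrite -ff' //.
  exact: WV.
- exact: cg.
Qed.

Lemma homeo_image {X Y : topologicalType} (A : set X) (B : set Y) (f : X -> Y) :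
  homeo A B f -> f @` A = B.
Proof.
case=> g [fAB gBA [gf fg] cf cg]; apply/seteqP; split.
  by move=> _ [a Aa <-]; apply: fAB.
by move=> b Bb; exists (g b); [apply: gBA|apply: fg].
Qed.

Lemma homeo_open_in {X Y : topologicalType} (A D : set X) (B : set Y) (f : X -> Y) :
  homeo A B f -> open_in A D -> open_in B (f @` D).
Proof.
case=> g [fAB gBA [gf fg] cf cg] [O [oO ->]].
have -> : f @` (A `&` O) = [set b | B b /\ O (g b)].
  apply/seteqP; split.
    by move=> _ [a [Aa Oa] <-]; split; [apply: fAB|rewrite gf].
  by move=> b [Bb Ogb]; exists (g b); [split => //; apply: gBA|apply: fg].
exact: wc_preim.
Qed.

Lemma homeo_fst {X Y : topologicalType} (A : set (X * Y)) (c : Y) :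
  (forall p, A p -> p.2 = c) -> homeo A (fst @` A) fst.
Proof.
move=> Ac; exists (fun x => (x, c)); split.
- by move=> a Aa; exists a.
- by move=> _ [[a b] Aab <-]; rewrite -(Ac _ Aab).
- split; last by [].
  by case=> a b Aab /=; rewrite -(Ac _ Aab).
- exact: wc_fst.
- by apply: wc_pair; [exact: wc_id|exact: wc_cst].
Qed.

Lemma homeo_pair {X Y : topologicalType} (A : set X) (c : Y) :
  homeo A ((fun x => (x, c)) @` A) (fun x => (x, c)).
Proof.
exists fst; split.
- by move=> a Aa; exists a.
- by move=> _ [a Aa <-].
- by split => // _ [a Aa <-].
- by apply: wc_pair; [exact: wc_id|exact: wc_cst].
- exact: wc_fst.
Qed.

Lemma etale_units_open {X : topologicalType} (o : gops X) :
  is_groupoid o -> continuous (gr o) -> etale o -> open (units_of o).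
Proof.
case=> [[ax1 ax2] _ _ _ _] cr [_ et]; apply: open_nbhsP => x ux.
have [U [oU Ux _ [g [_ _ [gr_ _] _ _]]]] := et x.
exists (U `&` gr o @^-1` U); split.
- apply: openI => //; exact: (proj1 (continuousP _) cr).
- by split => //; rewrite /preimage /= (ux : gr o x = x).
- move=> y [Uy Ury]; rewrite /units_of /=.
  have e : gr o (gr o y) = gr o y by case: (ax1 y).
  by rewrite -[RHS](gr_ _ Uy) -[LHS](gr_ _ Ury) e.
Qed.

Lemma units_closed {X : topologicalType} (o : gops X) :
  continuous (gr o) -> hausdorff_space X -> open (~` units_of o).
Proof.
move=> cr; rewrite open_hausdorff => hX; apply: open_nbhsP => x nux.
have /hX [[A B] /= [xA yB] [oA oB /eqP AB0]] : x != gr o x.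
  by apply/eqP => e; apply: nux; rewrite /units_of /= -e.
exists (A `&` gr o @^-1` B); split.
- apply: openI => //; exact: (proj1 (continuousP _) cr).
- by split; rewrite -inE.
- move=> y [Ay By] uy; rewrite /units_of /= in uy.
  have : (A `&` B) y by split => //; rewrite -uy.
  by rewrite AB0.
Qed.

Unset Implicit Arguments.

Theorem lemma4p3 (G S : topologicalType) (R : comUnitRingType)
  (oG : gops G) (T : set R) (oS : gops S)
  (i : G * discrete_topology R -> S) (q : S -> G) :
  topological_groupoid oG -> hausdorff_space G -> locally_compact [set: G] ->
  etale oG ->
  unit_subgroup T ->
  discrete_twist oG T oS i q ->
  [/\ (* (a) *) etale oS,
      (* (b) *) homeo (bundle_dom oG T) (i @` bundle_dom oG T) i /\
                open (i @` bundle_dom oG T),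
      (* (c) *)
      (forall alpha, exists B, exists P : G -> S,
         [/\ open_bisection oG B, B alpha, {within B, continuous P},
             (forall beta, B beta -> q (P beta) = beta) /\
             homeo (prod_T B T) (q @^-1` B) (triv_map oG oS i P) &
             (forall beta, B beta -> units_of oG beta -> units_of oS (P beta))]) &
      (* (d) *)
      (ample oG ->
       forall alpha, exists B, exists P : G -> S,
         [/\ open_bisection oG B /\ compact B, B alpha, {within B, continuous P},
             (forall beta, B beta -> q (P beta) = beta) &
             homeo (prod_T B T) (q @^-1` B) (triv_map oG oS i P)])].
Proof.
move=> tG hG _ etG [Tunit T1 TM TV].
move=> [[tS [hS S0]] [ci ihom cq qhom] [[ihomeo qhomeo] [i1 iinj qquot]] i2 i3].
have tG' := tG; case: tG' => gG crG csG ciG cmG.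
have tS' := tS; case: tS' => gS crS csS ciS cmS.
case: (gG) => [[axG1 axG2] axG3 axG4 axG5 axG6].
case: (gS) => [[axS1 axS2] axS3 axS4 axS5 axS6].
have uG1 : forall a, units_of oG (gr oG a) by move=> a; case: (axG1 a).
have uS1 : forall a, units_of oS (gr oS a) by move=> a; case: (axS1 a).
have qi : forall x z, units_of oG x -> T z -> q (i (x, z)) = x.
  move=> x z ux Tz.
  have : (i @` prod_T [set x] T) (i (x, z)) by exists (x, z).
  by rewrite (i1 x ux).
have qsurj : forall e, units_of oG (q e) -> exists2 z, T z & i (q e, z) = e.
  move=> e ue; have : (q @^-1` [set q e]) e by [].
  rewrite -(i1 _ ue) => -[[x z] [/= xe Tz] ie]; exists z => //.
  by rewrite -xe.
have ir : forall x z, units_of oG x -> T z ->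
    gr oS (i (x, z)) = i (x, 1) /\ gs oS (i (x, z)) = i (x, 1).
  move=> x z ux Tz; have [h1 h2] := ihom.1 (x, z) (conj ux Tz).
  by rewrite -h1 -h2.
have imul : forall x z w, units_of oG x -> T z -> T w ->
    gmul oS (i (x, z)) (i (x, w)) = i (x, z * w).
  move=> x z w ux Tz Tw.
  by rewrite -(ihom.2 (x, z) (x, w) (conj ux Tz) (conj ux Tw)).
have qr : forall e, q (gr oS e) = gr oG (q e) by move=> e; case: (qhom.1 e I).
have qs : forall e, q (gs oS e) = gs oG (q e) by move=> e; case: (qhom.1 e I).
have qm : forall a b, gs oS a = gr oS b -> q (gmul oS a b) = gmul oG (q a) (q b).
  by move=> a b ab; apply: qhom.2.
have rS : forall e, gr oS e = i (gr oG (q e), 1).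
  move=> e; have := uS1 e; rewrite S0 => -[[x y] [ux /= ->] E].
  have := qi x 1 ux T1; rewrite E qr => ->; by rewrite -E.
have qtriv : forall (P : G -> S) b z, q (P b) = b -> T z ->
    q (triv_map oG oS i P (b, z)) = b.
  move=> P b z qP Tz; rewrite /triv_map /=.
  rewrite qm; last by rewrite (ir _ _ (uG1 b) Tz).2 rS qP.
  by rewrite qi // qP; case: (axG5 b).
have etS : etale oS.
  split; first by move=> x; apply: uS1.
  move=> e.
  have [B [P [[oB bisB] Bq cP qP hphi]]] := i2 (q e).
  have hphi' := hphi.
  case: hphi' => g [phimap gmap [gphi phig] cphi cg].
  have hg : homeo (q @^-1` B) (prod_T B T) g.
    by exists (triv_map oG oS i P); split.
  have [U [oU Uq oinU hU]] := etG.2 (q e).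
  pose B' := B `&` U.
  pose z0 := (g e).2.
  pose W := [set e' | B' (q e') /\ (g e').2 = z0].
  have g1 : forall e', B (q e') -> (g e').1 = q e'.
    move=> e' Be'; have [Bg Tg] := gmap e' Be'.
    rewrite -[in RHS](phig e' Be').
    by move: Bg Tg; case: (g e') => b z /= Bb Tz; rewrite qtriv //; apply: qP.
  have WsubB : W `<=` q @^-1` B by move=> e' [[Be' _] _].
  have oqB : open (q @^-1` B) by exact: (proj1 (continuousP _) cq).
  have oW : open W.
    have -> : W = [set e' | (q @^-1` B) e' /\
        [set p : G * discrete_topology R | B' p.1 /\ [set z0] p.2] (g e')].
      apply/seteqP; split => e' /=.
        by case=> [[Be' Ue'] ze']; split => //; rewrite g1.
      by case=> Be' [B'g zg]; split => //; rewrite -(g1 e' Be').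
    apply: open_in_open oqB (wc_preim cg _).
    by apply: openX; [exact: openI|exact: discrete_open].
  have h1 := homeo_sub hg WsubB.
  have gW : fst @` (g @` W) = B'.
    apply/seteqP; split.
      by move=> _ [_ [e' [B'e' _] <-] <-]; rewrite g1 //; case: B'e'.
    move=> b B'b.
    have Tz0 : T z0 by case: (gmap e Bq).
    have Bb : B b by case: B'b.
    have ph := phimap (b, z0) (conj Bb Tz0).
    have qph : q (triv_map oG oS i P (b, z0)) = b by apply: qtriv => //; apply: qP.
    exists (g (triv_map oG oS i P (b, z0))); last by rewrite gphi.
    exists (triv_map oG oS i P (b, z0)) => //.
    by rewrite /W /= qph gphi.
  have h2 : homeo (g @` W) B' fst.
    rewrite -gW; apply: (homeo_fst (c := z0)).
    by move=> _ [e' [_ ze'] <-].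
  have h3 : homeo B' (gr oG @` B') (gr oG).
    by apply: (homeo_sub hU) => x [].

  pose j1 := fun x : G => ((x, (1 : R)) : G * discrete_topology R).
  have h4 : homeo (gr oG @` B') (j1 @` (gr oG @` B')) j1 by apply: homeo_pair.
  have h5 : homeo (j1 @` (gr oG @` B')) (i @` (j1 @` (gr oG @` B'))) i.
    apply: (homeo_sub ihomeo).
    by move=> _ [_ [b _ <-] <-]; split => //; apply: uG1.
  have hc := homeo_comp h1 (homeo_comp h2 (homeo_comp h3 (homeo_comp h4 h5))).
  have hc' : homeo W (i @` (j1 @` (gr oG @` B'))) (gr oS).
    apply: (homeo_ext hc) => e' [[Be' _] _] /=.
    by rewrite rS g1.
  have hi := homeo_image hc'.
  exists W; split => //; rewrite hi //.
  have o1 : open_in U B' by exists B; split => //; rewrite setIC.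
  have o3 := open_in_trans oinU (homeo_open_in hU o1).
  have o4 := homeo_open_in (homeo_pair (units_of oG) (1 : discrete_topology R)) o3.
  have e4 : (fun x => (x, (1 : discrete_topology R))) @` units_of oG = bundle_units oG R.
    apply/seteqP; split; first by move=> _ [x ux <-].
    by case=> x y [ux /= ->]; exists x.
  rewrite e4 in o4.
  exact: homeo_open_in ihomeo o4.
have oS0 : open (units_of oS) := etale_units_open gS crS etS.
have oG0 : open (units_of oG) := etale_units_open gG crG etG.
have Dq : i @` bundle_dom oG T = q @^-1` units_of oG.
  apply/seteqP; split.
    by move=> _ [[x z] [ux Tz] <-]; rewrite /preimage /= qi.
  move=> e ue; have [z Tz ie] := qsurj e ue; by exists (q e, z).
have oD : open (i @` bundle_dom oG T).
  by rewrite Dq; exact: (proj1 (continuousP _) cq).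
have hb : homeo (bundle_dom oG T) (i @` bundle_dom oG T) i.
  have : forall e, exists z : R, units_of oG (q e) -> T z /\ i (q e, z) = e.
    move=> e; case: (pselect (units_of oG (q e))) => ue.
      by have [z Tz ie] := qsurj e ue; exists z.
    by exists 1.
  case/choice => zf hzf.
  exists (fun e => ((q e, zf e) : G * discrete_topology R)); split.
  - by move=> p Dp; exists p.
  - move=> e; rewrite Dq => ue; have [Tz _] := hzf e ue; by split.
  - split.
    + case=> x z [ux Tz].
      have ux' : units_of oG (q (i (x, z))) by rewrite qi.
      have [Tz' ie] := hzf _ ux'.
      by apply: iinj => //; split.
    + by move=> e; rewrite Dq => ue; case: (hzf e ue).
  - exact: ci.
  - apply/wcP => e0 De0 V oV Vh.
    have ue0 : units_of oG (q e0) by rewrite Dq in De0.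
    have [Tz0 ie0] := hzf e0 ue0.
    move: oV; rewrite openE => /(_ _ Vh) /nbhs_prodP [P1 [Q1 [oP1 P1x oQ1 Q1z PQV]]].
    pose k := fun e => gmul oS (i (q e, (zf e0)^-1)) e.
    have ck : {within i @` bundle_dom oG T, continuous k}.
      have c1 : {within i @` bundle_dom oG T,
                 continuous (fun e => i (q e, (zf e0)^-1))}.
        apply: (wc_comp (f := fun e => ((q e, (zf e0)^-1) : G * discrete_topology R))
                        (B := bundle_dom oG T)).
        - by apply: wc_pair; [exact: wc_cont| exact: wc_cst].
        - move=> e; rewrite Dq => ue; split => //; exact: TV.
        - exact: ci.
      have c2 := wc_pair c1 (@wc_id _ (i @` bundle_dom oG T)).
      have mp : forall e, (i @` bundle_dom oG T) e ->
          composable oS (i (q e, (zf e0)^-1), e).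
        move=> e; rewrite Dq => ue.
        rewrite /composable /= (ir _ _ ue (TV _ Tz0)).2 rS.
        by rewrite (ue : gr oG (q e) = q e).
      exact: (wc_comp c2 mp cmS).
    have [O [oO HO]] := wc_preim ck oS0.
    exists (O `&` q @^-1` P1); split.
    + apply: openI => //; exact: (proj1 (continuousP _) cq).
    + split => //.
      have : [set e | (i @` bundle_dom oG T) e /\ units_of oS (k e)] e0.
        split => //; rewrite /k -[X in gmul _ _ X]ie0 imul //; last exact: TV.
        rewrite mulVr; last exact: Tunit.
        by rewrite S0; exists (q e0, 1).
      by rewrite HO => -[].
    + move=> e De [Oe P1e].
      have ue : units_of oG (q e) by rewrite Dq in De.
      have [Tz ie] := hzf e ue.
      have : [set e | (i @` bundle_dom oG T) e /\ units_of oS (k e)] e.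
        by rewrite HO.
      case=> _; rewrite /k -[X in gmul _ _ X]ie imul //; last exact: TV.
      rewrite S0 => -[[y w] [uy /= w1] iyw].
      have := iinj (y, w) (q e, (zf e0)^-1 * zf e) (conj uy (eq_ind_r T T1 w1))
                       (conj ue (TM _ _ (TV _ Tz0) Tz)) iyw.
      case=> _ e1.
      have ez : zf e = zf e0.
        have : zf e0 * w = zf e0 * ((zf e0)^-1 * zf e) by rewrite e1.
        by rewrite mulrA mulrV ?Tunit // mul1r w1 mulr1 => ->.
      by apply: PQV => //=; rewrite ez.
have restr : forall (B0 B : set G) (P : G -> S), B `<=` B0 ->
    (forall b, B0 b -> q (P b) = b) ->
    homeo (prod_T B0 T) (q @^-1` B0) (triv_map oG oS i P) ->
    homeo (prod_T B T) (q @^-1` B) (triv_map oG oS i P).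
  move=> B0 B P BB0 qP h.
  have hs := homeo_sub h (A' := prod_T B T) (fun p (H : prod_T B T p) => conj (BB0 _ H.1) H.2).
  suff <- : triv_map oG oS i P @` prod_T B T = q @^-1` B by [].
  apply/seteqP; split.
    move=> _ [[b z] [Bb Tz] <-]; rewrite /preimage /= qtriv //.
    by apply: qP; exact: BB0.
  move=> e Be; case: (h) => g [phimap gmap [gphi phig] _ _].
  have B0e : B0 (q e) by apply: BB0.
  exists (g e); last exact: phig.
  have [Bg Tg] := gmap e B0e; split => //.
  have e1 : (g e).1 = q e.
    rewrite -[in RHS](phig e B0e).
    by move: Bg Tg; case: (g e) => b z /= Bb Tz; rewrite qtriv //; apply: qP.
  by rewrite e1.
split => //.
- move=> alpha; case: (pselect (units_of oG alpha)) => ua.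
  + exists (units_of oG), (fun x => i (x, 1)); split.
    * split => //; split => a b ua' ub' e.
        by rewrite -(ua' : gr oG a = a) -(ub' : gr oG b = b).
      have sa : gs oG a = a by have := (axG1 a).1; rewrite (ua' : gr oG a = a).
      have sb : gs oG b = b by have := (axG1 b).1; rewrite (ub' : gr oG b = b).
      by rewrite -sa -sb.
    * exact: ua.
    * apply: (wc_comp (f := fun x => ((x, 1) : G * discrete_topology R))
                     (B := bundle_dom oG T)).
      - by apply: wc_pair; [exact: wc_id| exact: wc_cst].
      - by move=> x ux; split.
      - exact: ci.
    * split; first by move=> b ub; rewrite qi.
      have -> : prod_T (units_of oG) T = bundle_dom oG T by [].
      rewrite -Dq.
      apply: (homeo_ext hb) => -[x z] [ux Tz].
      by rewrite /triv_map /= (ux : gr oG x = x) imul // mulr1.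
    * by move=> b ub _; rewrite S0; exists (b, 1).
  + have [B0 [P [[oB0 bisB0] B0a cP qP hphi]]] := i2 alpha.
    exists (B0 `&` ~` units_of oG), P; split.
    * split; first exact: (openI oB0 (units_closed crG hG)).
      case: bisB0 => b1 b2; split => a b [Ba _] [Bb _]; [exact: b1|exact: b2].
    * by split.
    * by apply: continuous_subspaceW cP => x [].
    * split; first by move=> b [Bb _]; apply: qP.
      by apply: (restr B0) => // x [].
    * by move=> b [_ nb].
- move=> amp alpha.
  have [B0 [P [[oB0 _] B0a cP qP hphi]]] := i2 alpha.
  have [B [obB cB Ba BB0]] := amp B0 alpha oB0 B0a.
  exists B, P; split => //.
  + exact: continuous_subspaceW cP.
  + by move=> b Bb; apply/qP/BB0.
  + exact: (restr B0).
Qed.
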